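(* Given an operator system $\mathcal V \subset B(H)$ and a projection $p \in \mathcal V$, with $q = I-p$, then $(M_2(\mathcal V) / J_{p\oplus q}, \{\widetilde{C}(p_n \oplus q_n)\}_n, (p\oplus q) + J_{p \oplus q})$ is an operator system.
   Context: For $n \in \mathbb N$ let $p_n = I_n \otimes p$, $q_n = I_n \otimes q$, and define $C(p_n \oplus q_n) = \{ x \in M_{2n}(\mathcal V) : x = x^*, \ (p_n \oplus q_n)x(p_n \oplus q_n) \in B(H^{2n})^+\}$, where $M_n(M_2(\mathcal V))$ is identified with $M_2(M_n(\mathcal V)) = M_{2n}(\mathcal V)$ via the canonical shuffle. Let $J_{p \oplus q} = \operatorname{span}\big(C(p\oplus q) \cap -C(p\oplus q)\big) \subseteq M_2(\mathcal V)$, and let $\widetilde{C}(p_n \oplus q_n) = \{ (x_{ij} + J_{p\oplus q}) \in M_n(M_2(\mathcal V)/J_{p\oplus q}) : (x_{ij}) \in C(p_n\oplus q_n)\}$. *)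

(* Defs.v *)
From mathcomp Require Import all_boot all_algebra.
From mathcomp Require Import reals.
From mathcomp.real_closed Require Import complex.
Set Implicit Arguments. Unset Strict Implicit. Unset Printing Implicit Defensive.
Import GRing.Theory Num.Theory.
Local Open Scope ring_scope.

Section OpSys.
Variables (R : realType) (H : lmodType R[i]) (ip : H -> H -> R[i]).
Local Notation C := R[i].

Definition hnorm (x : H) : C := sqrtC (ip x x).

Definition is_inner_product : Prop :=
  [/\ forall (a : C) (x y z : H), ip (a *: x + y) z = a * ip x z + ip y z,
      forall x y : H, ip y x = (ip x y)^*,
      forall x : H, 0 <= ip x x
    & forall x : H, ip x x = 0 -> x = 0].

Definition hcomplete : Prop :=
  forall u : nat -> H,
    (forall eps : R, 0 < eps -> exists N : nat, forall m n : nat,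
        (N <= m)%N -> (N <= n)%N -> hnorm (u m - u n) < (eps%:C)%C) ->
    exists l : H, forall eps : R, 0 < eps -> exists N : nat, forall n : nat,
        (N <= n)%N -> hnorm (u n - l) < (eps%:C)%C.

Definition hilbert_space : Prop := is_inner_product /\ hcomplete.

Definition bounded_linear (T : H -> H) : Prop :=
  (forall (a : C) (x y : H), T (a *: x + y) = a *: T x + T y) /\
  exists M : R, forall x : H, hnorm (T x) <= (M%:C)%C * hnorm x.

Definition adjoint_of (S T : H -> H) : Prop :=
  forall x y : H, ip (T x) y = ip x (S y).

Definition operator_system (V : (H -> H) -> Prop) : Prop :=
  [/\ forall T, V T -> bounded_linear T,
      V id,
      forall (a : C) (T S : H -> H), V T -> V S -> V (fun h => a *: T h + S h)
    & forall T, V T -> exists S, V S /\ adjoint_of S T].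

Definition projection (p : H -> H) : Prop :=
  (forall h, p (p h) = p h) /\ adjoint_of p p.

(* an operator on H^I given by the matrix X is in B(H^I)^+ *)
Definition mx_pos (I : finType) (X : I -> I -> H -> H) : Prop :=
  forall h : I -> H, 0 <= \sum_(i : I) \sum_(j : I) ip (X i j (h j)) (h i).

Definition M2 := 'I_2 -> 'I_2 -> H -> H.

(* the diagonal entries of p (+) q, with q = I - p *)
Definition pqd (p : H -> H) (a : 'I_2) : H -> H :=
  if a == ord0 then p else (fun h => h - p h).

(* An element X of M_n(M_2(V)) is written X i j a b (block (i,j), entry (a,b)).
   Via the canonical shuffle it is the element of M_2(M_n(V)) = M_{2n}(V)
   with entry X i j a b at position ((a,i),(b,j)); we index M_{2n} by
   'I_n * 'I_2, which only reorders the basis of H^{2n}. *)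
Definition mxV (V : (H -> H) -> Prop) n (X : 'I_n -> 'I_n -> M2) : Prop :=
  forall i j a b, V (X i j a b).

Definition mx_selfadj n (X : 'I_n -> 'I_n -> M2) : Prop :=
  forall i j a b, adjoint_of (X i j a b) (X j i b a).

Definition compress (p : H -> H) n (X : 'I_n -> 'I_n -> M2)
  : ('I_n * 'I_2)%type -> ('I_n * 'I_2)%type -> H -> H :=
  fun u v h => pqd p u.2 (X u.1 v.1 u.2 v.2 (pqd p v.2 h)).

Definition Cpq (V : (H -> H) -> Prop) (p : H -> H) n (X : 'I_n -> 'I_n -> M2)
  : Prop :=
  [/\ mxV V X, mx_selfadj X & mx_pos (compress p X)].

Definition Cpq1 V p (Y : M2) : Prop := Cpq V p (fun _ _ : 'I_1 => Y).

(* J_{p (+) q} = span (C(p (+) q) \cap - C(p (+) q)) *)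
Definition Jpq V p (Y : M2) : Prop :=
  exists (k : nat) (c : 'I_k -> C) (x : 'I_k -> M2),
    (forall l, Cpq1 V p (x l) /\ Cpq1 V p (fun a b h => - x l a b h)) /\
    (forall a b h, Y a b h = \sum_(l < k) c l *: x l a b h).

(* X = Y in M_n(M_2(V)/J) *)
Definition mx_eqJ V p n (X Y : 'I_n -> 'I_n -> M2) : Prop :=
  forall i j, Jpq V p (fun a b h => X i j a b h - Y i j a b h).

(* the class of X lies in \tilde C(p_n (+) q_n) *)
Definition Ctilde V p n (X : 'I_n -> 'I_n -> M2) : Prop :=
  exists Y, Cpq V p Y /\ mx_eqJ V p X Y.

(* the class of X is hermitian in M_n(M_2(V)/J) *)
Definition mx_herm V p n (X : 'I_n -> 'I_n -> M2) : Prop :=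
  forall X' : 'I_n -> 'I_n -> M2,
    (forall i j a b, adjoint_of (X' i j a b) (X j i b a)) -> mx_eqJ V p X' X.

Definition mx_add n (X Y : 'I_n -> 'I_n -> M2) : 'I_n -> 'I_n -> M2 :=
  fun i j a b h => X i j a b h + Y i j a b h.
Definition mx_scale n (t : C) (X : 'I_n -> 'I_n -> M2) : 'I_n -> 'I_n -> M2 :=
  fun i j a b h => t *: X i j a b h.
Definition mx_zero n : 'I_n -> 'I_n -> M2 := fun _ _ _ _ _ => 0.

Definition mx_conj n m (alpha : 'M[C]_(n, m)) (X : 'I_n -> 'I_n -> M2)
  : 'I_m -> 'I_m -> M2 :=
  fun k l a b h => \sum_(i < n) \sum_(j < n) ((alpha i k)^* * alpha j l) *: X i j a b h.

(* e_n = I_n \otimes (p (+) q), the order unit (p (+) q) + J at level n *)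
Definition unit_n (p : H -> H) n : 'I_n -> 'I_n -> M2 :=
  fun i j a b => if (i == j) && (a == b) then pqd p a else (fun _ => 0).

(* Written out on
   representatives in M_n(M_2(V)):
   - J is self-adjoint, so M_2(V)/J is a *-vector space;
   - each \tilde C_n consists of hermitian elements;
   - each \tilde C_n is a cone;
   - the family is compatible: alpha^* \tilde C_n alpha \subseteq \tilde C_m;
   - \tilde C_n \cap - \tilde C_n = {0};
   - e is a matrix order unit;
   - e is Archimedean. *)
Definition quotient_is_operator_system (V : (H -> H) -> Prop) (p : H -> H)
  : Prop :=
  [/\ forall Y Y' : M2, Jpq V p Y ->
        (forall a b, adjoint_of (Y' a b) (Y b a)) -> Jpq V p Y',
      forall n (X : 'I_n -> 'I_n -> M2), mxV V X ->
        Ctilde V p X -> mx_herm V p X,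
      forall n (X Y : 'I_n -> 'I_n -> M2), mxV V X -> mxV V Y ->
        Ctilde V p X -> Ctilde V p Y -> Ctilde V p (mx_add X Y),
      forall n (X : 'I_n -> 'I_n -> M2) (t : R), mxV V X -> 0 <= t ->
        Ctilde V p X -> Ctilde V p (mx_scale (t%:C)%C X) &
    [/\ forall n m (alpha : 'M[C]_(n, m)) (X : 'I_n -> 'I_n -> M2), mxV V X ->
        Ctilde V p X -> Ctilde V p (mx_conj alpha X),
      forall n (X : 'I_n -> 'I_n -> M2), mxV V X ->
        Ctilde V p X -> Ctilde V p (mx_scale (-1) X) -> mx_eqJ V p X ((@mx_zero n)),
      forall n (X : 'I_n -> 'I_n -> M2), mxV V X -> mx_herm V p X ->
        exists r : R, 0 < r /\
          Ctilde V p (mx_add X (mx_scale (r%:C)%C (@unit_n p n)))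
    & forall n (X : 'I_n -> 'I_n -> M2), mxV V X -> mx_herm V p X ->
        (forall r : R, 0 < r ->
          Ctilde V p (mx_add X (mx_scale (r%:C)%C (@unit_n p n)))) ->
        Ctilde V p X]].

End OpSys.

(* Main.v *)
Require Import Defs.
From mathcomp Require Import all_boot all_order all_algebra.
From mathcomp Require Import reals boolp.
From mathcomp.real_closed Require Import complex.
From mathcomp Require Import ring.
Set Implicit Arguments. Unset Strict Implicit. Unset Printing Implicit Defensive.
Import Order.TTheory GRing.Theory Num.Theory.
Local Open Scope ring_scope.



Section IP.
Variables (R : realType) (H : lmodType R[i]) (ip : H -> H -> R[i]).
Hypothesis hip : is_inner_product ip.
Local Notation C := R[i].

Lemma ipDl x y z : ip (x + y) z = ip x z + ip y z.
Proof. move: hip => [h _ _ _]; by have := h 1 x y z; rewrite scale1r mul1r. Qed.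
Lemma ip0l z : ip 0 z = 0.
Proof. have := ipDl 0 0 z; rewrite addr0 => /eqP; rewrite -subr_eq subrr eq_sym => /eqP //. Qed.
Lemma ipZl a x z : ip (a *: x) z = a * ip x z.
Proof. move: hip => [h _ _ _]; by rewrite -[a *: x]addr0 h ip0l addr0. Qed.
Lemma ipC x y : ip y x = (ip x y)^*.
Proof. by case: (hip). Qed.
Lemma ipDr x y z : ip z (x + y) = ip z x + ip z y.
Proof. by rewrite ipC ipDl rmorphD /= -!ipC. Qed.
Lemma ipZr a x z : ip z (a *: x) = a^* * ip z x.
Proof. by rewrite ipC ipZl rmorphM /= -!ipC. Qed.
Lemma ip0r z : ip z 0 = 0.
Proof. by rewrite ipC ip0l rmorph0. Qed.
Lemma ipNl x z : ip (- x) z = - ip x z.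
Proof. by rewrite -scaleN1r ipZl mulN1r. Qed.
Lemma ipNr x z : ip z (- x) = - ip z x.
Proof. by rewrite -scaleN1r ipZr rmorphN1 /= mulN1r. Qed.
Lemma ipBl x y z : ip (x - y) z = ip x z - ip y z.
Proof. by rewrite ipDl ipNl. Qed.
Lemma ipBr x y z : ip z (x - y) = ip z x - ip z y.
Proof. by rewrite ipDr ipNr. Qed.
Lemma ip_ge0 x : 0 <= ip x x.
Proof. by case: (hip). Qed.
Lemma ip_suml (I : Type) (r : seq I) (P : pred I) (F : I -> H) z :
  ip (\sum_(i <- r | P i) F i) z = \sum_(i <- r | P i) ip (F i) z.
Proof. elim: r => [|a r IH]; rewrite ?big_nil ?ip0l // !big_cons.
by case: (P a); rewrite ?ipDl IH. Qed.
Lemma ip_sumr (I : Type) (r : seq I) (P : pred I) (F : I -> H) z :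
  ip z (\sum_(i <- r | P i) F i) = \sum_(i <- r | P i) ip z (F i).
Proof. elim: r => [|a r IH]; rewrite ?big_nil ?ip0r // !big_cons.
by case: (P a); rewrite ?ipDr IH. Qed.
Lemma ip_eq0 x : (forall y, ip x y = 0) -> x = 0.
Proof. by case: (hip) => _ _ _ h /(_ x)/h. Qed.
Lemma ip_inj x x' : (forall y, ip x y = ip x' y) -> x = x'.
Proof. move=> h; apply/eqP; rewrite -subr_eq0; apply/eqP/ip_eq0 => y.
by rewrite ipBl h subrr. Qed.
Lemma ip_injr x x' : (forall y, ip y x = ip y x') -> x = x'.
Proof. move=> h; apply: ip_inj => y; by rewrite ipC h -ipC. Qed.
Lemma adj_uniq (S S' T : H -> H) : adjoint_of ip S T -> adjoint_of ip S' T -> S = S'.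
Proof. move=> h1 h2; apply: funext => y; apply: ip_injr => x; by rewrite -h1 h2. Qed.
Lemma adj_sym (S T : H -> H) : adjoint_of ip S T -> forall x y, ip (S x) y = ip x (T y).
Proof. move=> h x y; by rewrite ipC -h -ipC. Qed.
End IP.



Section Ops.
Variables (R : realType) (H : lmodType R[i]).
Local Notation C := R[i].

Definition lin (T : H -> H) := forall (a : C) x y, T (a *: x + y) = a *: T x + T y.

Variable T : H -> H.
Hypothesis hT : lin T.
Lemma lin0 : T 0 = 0.
Proof. have e := hT 1 0 0; rewrite !scale1r addr0 in e; apply: (addrI (T 0)); by rewrite addr0 -e. Qed.
Lemma linD x y : T (x + y) = T x + T y.
Proof. by have := hT 1 x y; rewrite !scale1r. Qed.
Lemma linZ a x : T (a *: x) = a *: T x.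
Proof. by have := hT a x 0; rewrite !addr0 lin0 addr0. Qed.
Lemma linN x : T (- x) = - T x.
Proof. by rewrite -scaleN1r linZ scaleN1r. Qed.
Lemma linB x y : T (x - y) = T x - T y.
Proof. by rewrite linD linN. Qed.
Lemma lin_sum (I : Type) (r : seq I) (P : pred I) (F : I -> H) :
  T (\sum_(i <- r | P i) F i) = \sum_(i <- r | P i) T (F i).
Proof. elim: r => [|a r IH]; rewrite ?big_nil ?lin0 // !big_cons.
by case: (P a); rewrite ?linD IH. Qed.
End Ops.

Section OSys.
Variables (R : realType) (H : lmodType R[i]) (ip : H -> H -> R[i]).
Variable V : (H -> H) -> Prop.
Hypothesis os : operator_system ip V.
Local Notation C := R[i].

Lemma V_lin T : V T -> lin T.
Proof. by case: os => h _ _ _ /h []. Qed.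
Lemma V_ext T S : V T -> (forall h, T h = S h) -> V S.
Proof. by move=> VT e; rewrite -(funext e). Qed.
Lemma V_comb a T S : V T -> V S -> V (fun h => a *: T h + S h).
Proof. by case: os => _ _ h _; apply: h. Qed.
Lemma V0 : V (fun _ => 0).
Proof. case: os => _ Vid _ _; apply: V_ext (V_comb (-1) Vid Vid) _ => h.
by rewrite scaleN1r addNr. Qed.
Lemma VD T S : V T -> V S -> V (fun h => T h + S h).
Proof. move=> a b; apply: V_ext (V_comb 1 a b) _ => h; by rewrite scale1r. Qed.
Lemma VZ a T : V T -> V (fun h => a *: T h).
Proof. move=> a'; apply: V_ext (V_comb a a' V0) _ => h; by rewrite addr0. Qed.
Lemma VN T : V T -> V (fun h => - T h).
Proof. move=> a; apply: V_ext (VZ (-1) a) _ => h; by rewrite scaleN1r. Qed.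
Lemma VB T S : V T -> V S -> V (fun h => T h - S h).
Proof. move=> a b; exact: VD a (VN b). Qed.
Lemma V_sum (I : Type) (r : seq I) (P : pred I) (F : I -> H -> H) :
  (forall i, V (F i)) -> V (fun h => \sum_(i <- r | P i) F i h).
Proof. move=> hF; elim: r => [|a r IH].
  apply: V_ext V0 _ => h; by rewrite big_nil.
case: (boolP (P a)) => Pa.
  apply: V_ext (VD (hF a) IH) _ => h; by rewrite big_cons Pa.
apply: V_ext IH _ => h; by rewrite big_cons (negbTE Pa).
Qed.
Lemma V_adj : exists f : (H -> H) -> (H -> H),
  forall T, V T -> V (f T) /\ adjoint_of ip (f T) T.
Proof.
have : forall T, exists S, V T -> V S /\ adjoint_of ip S T.
  move=> T; case: (pselect (V T)) => VT.
    case: os => _ _ _ /(_ T VT) [S [VS aS]]; by exists S.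
  by exists T.
by case/choice => f hf; exists f.
Qed.
End OSys.



Section CLemmas.
Variable (R : realType).
Local Notation C := R[i].
Lemma ii : 'i * 'i = -1 :> C.
Proof. by rewrite -expr2 sqrCi. Qed.
Lemma polC_x (x y : C) : x = ((x + y) + 'i * ('i * y - 'i * x)) / 2.
Proof.
have -> : (x + y) + 'i * ('i * y - 'i * x) = x * 2 - ('i * 'i + 1) * (x - y) by ring.
by rewrite ii addNr mul0r subr0 mulfK // pnatr_eq0.
Qed.
Lemma polC_y (x y : C) : y = ((x + y) - 'i * ('i * y - 'i * x)) / 2.
Proof.
have -> : (x + y) - 'i * ('i * y - 'i * x) = y * 2 + ('i * 'i + 1) * (x - y) by ring.
by rewrite ii addNr mul0r addr0 mulfK // pnatr_eq0.
Qed.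
Lemma polC_herm (x y : C) : (x + y)^* = x + y ->
  ('i * y - 'i * x)^* = 'i * y - 'i * x -> y = x^*.
Proof.
move=> e1 e2; rewrite [y](polC_y x) -e1 -e2 rmorphD rmorphB !rmorphM /= conjCi.
rewrite [RHS](polC_x _ y^*); congr (_ / 2).
have -> : x^* + y^* - 'i * (- 'i * y^* - - 'i * x^*) = x^* + y^* - ('i * 'i) * (x^* - y^*) by ring.
have -> : x^* + y^* + 'i * ('i * y^* - 'i * x^*) = x^* + y^* - ('i * 'i) * (x^* - y^*) by ring.
by [].
Qed.
End CLemmas.

Section Form.
Variables (R : realType) (H : lmodType R[i]) (ip : H -> H -> R[i]).
Hypothesis hip : is_inner_product ip.
Local Notation C := R[i].
Variables (I : finType) (A : I -> I -> H -> H).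
Hypothesis hA : forall u v, lin (A u v).

Definition Bf (g h : I -> H) : C := \sum_(u : I) \sum_(v : I) ip (A u v (g v)) (h u).

Lemma BfDl a g g' k : Bf (fun w => a *: g w + g' w) k = a * Bf g k + Bf g' k.
Proof.
rewrite /Bf mulr_sumr -big_split; apply: eq_bigr => u _.
rewrite mulr_sumr -big_split; apply: eq_bigr => v _.
by rewrite hA (ipDl hip) (ipZl hip).
Qed.
Lemma BfDr a g g' k : Bf k (fun w => a *: g w + g' w) = a^* * Bf k g + Bf k g'.
Proof.
rewrite /Bf mulr_sumr -big_split; apply: eq_bigr => u _.
rewrite mulr_sumr -big_split; apply: eq_bigr => v _.
by rewrite (ipDr hip) (ipZr hip).
Qed.

Lemma BfAl g g' k : Bf (fun w => g w + g' w) k = Bf g k + Bf g' k.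
Proof.
rewrite /Bf -big_split; apply: eq_bigr => u _.
rewrite -big_split; apply: eq_bigr => v _.
by rewrite (linD (hA u v)) (ipDl hip).
Qed.
Lemma BfAr g g' k : Bf k (fun w => g w + g' w) = Bf k g + Bf k g'.
Proof.
rewrite /Bf -big_split; apply: eq_bigr => u _.
rewrite -big_split; apply: eq_bigr => v _.
by rewrite (ipDr hip).
Qed.

Lemma Bf_sum1 g h : Bf (fun w => g w + h w) (fun w => g w + h w)
   = (Bf g g + Bf h h) + (Bf g h + Bf h g).
Proof. rewrite BfAl !BfAr; ring. Qed.

Lemma Bf_sumi g h : Bf (fun w => 'i *: h w + g w) (fun w => 'i *: h w + g w)
   = (Bf g g + Bf h h) + ('i * Bf h g - 'i * Bf g h).
Proof.
rewrite BfDl !BfDr conjCi.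
have := ii R; move: ('i : C) => j hj.
have -> : j * (- j * Bf h h + Bf h g) + (- j * Bf g h + Bf g g) =
  (Bf g g - (j * j) * Bf h h) + (j * Bf h g - j * Bf g h) by ring.
by rewrite hj mulN1r opprK.
Qed.

Lemma polar_zero : (forall g, Bf g g = 0) -> forall g h, Bf g h = 0.
Proof.
move=> h0 g h; rewrite (polC_x (Bf g h) (Bf h g)).
have e1 := Bf_sum1 g h; have e2 := Bf_sumi g h.
rewrite !h0 !add0r in e1 e2.
by rewrite -e1 -e2 add0r mulr0 mul0r.
Qed.

Lemma polar_herm : (forall g, Bf g g \is Num.real) -> forall g h, Bf h g = (Bf g h)^*.
Proof.
move=> hr g h; apply: polC_herm; apply/eqP; rewrite -CrealE.
  have := Bf_sum1 g h => /(congr1 (fun z => z - (Bf g g + Bf h h))).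
  rewrite addrAC subrr add0r => <-; by rewrite rpredB ?rpredD.
have := Bf_sumi g h => /(congr1 (fun z => z - (Bf g g + Bf h h))).
rewrite addrAC subrr add0r => <-; by rewrite rpredB ?rpredD.
Qed.

Definition delta (w : I) (x : H) : I -> H := fun w' => if w' == w then x else 0.

Lemma Bf_delta u v x y : Bf (delta v x) (delta u y) = ip (A u v x) y.
Proof.
rewrite /Bf (bigD1 u) //= [X in _ + X]big1 => [|u' nu].
  rewrite addr0 (bigD1 v) //= [X in _ + X]big1 => [|v' nv].
    by rewrite addr0 /delta !eqxx.
  by rewrite /delta (negbTE nv) lin0 // (ip0l hip).
by rewrite big1 // => v' _; rewrite /delta (negbTE nu) (ip0r hip).
Qed.

Lemma form_zero : (forall g, Bf g g = 0) -> forall u v x, A u v x = 0.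
Proof.
move=> h0 u v x; apply: (ip_eq0 hip) => y.
by rewrite -Bf_delta polar_zero.
Qed.

Lemma form_herm : (forall g, Bf g g \is Num.real) ->
  forall u v, adjoint_of ip (A v u) (A u v).
Proof.
move=> hr u v x y; rewrite -Bf_delta (polar_herm hr) Bf_delta.
by rewrite -(ipC hip).
Qed.
End Form.



Section Adj.
Variables (R : realType) (H : lmodType R[i]) (ip : H -> H -> R[i]).
Hypothesis hip : is_inner_product ip.
Local Notation C := R[i].

Lemma adj_ext S T S' T' : adjoint_of ip S T -> (forall h, S h = S' h) ->
  (forall h, T h = T' h) -> adjoint_of ip S' T'.
Proof. by move=> a e1 e2 x y; rewrite -e1 -e2 a. Qed.
Lemma adj_swap S T : adjoint_of ip S T -> adjoint_of ip T S.
Proof. move=> a x y; exact: (adj_sym hip a). Qed.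
Lemma adj_lin2 (a b : C) S T S' T' : adjoint_of ip S T -> adjoint_of ip S' T' ->
  adjoint_of ip (fun h => a^* *: S h + b^* *: S' h) (fun h => a *: T h + b *: T' h).
Proof.
move=> h1 h2 x y; rewrite (ipDl hip) (ipDr hip) !(ipZl hip) !(ipZr hip) !conjCK.
by rewrite h1 h2.
Qed.
Lemma adj_zero S : adjoint_of ip S (fun _ => 0) -> forall y, S y = 0.
Proof.
move=> a y; apply: (ip_eq0 hip) => z; rewrite (ipC hip) -a (ip0l hip).
by rewrite rmorph0.
Qed.
Lemma adj_half S T S' T' : adjoint_of ip S T -> adjoint_of ip S' T' ->
  adjoint_of ip (fun h => 2^-1 *: (S h + S' h)) (fun h => 2^-1 *: (T' h + T h)).
Proof.
move=> h1 h2; apply: adj_ext (adj_lin2 (2^-1) (2^-1) h1 h2) _ _ => h.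
  by rewrite scalerDr fmorphV /= conjC_nat.
by rewrite scalerDr addrC.
Qed.
Lemma adj_halfi S T S' T' : adjoint_of ip S T -> adjoint_of ip S' T' ->
  adjoint_of ip (fun h => (- 'i / 2) *: (S h - S' h)) (fun h => (- 'i / 2) *: (T' h - T h)).
Proof.
move=> h1 h2; apply: adj_ext (adj_lin2 ('i / 2) (- 'i / 2) h1 h2) _ _ => h.
  rewrite scalerBr !rmorphM /= fmorphV /= conjC_nat rmorphN /= conjCi opprK.
  by rewrite -scaleNr mulNr opprK addrC.
by rewrite scalerBr -scaleNr mulNr opprK addrC.
Qed.
End Adj.

Section Main.
Variables (R : realType) (H : lmodType R[i]) (ip : H -> H -> R[i]).
Variables (V : (H -> H) -> Prop) (p : H -> H).
Hypothesis hip : is_inner_product ip.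
Hypothesis os : operator_system ip V.
Hypothesis Vp : V p.
Hypothesis pp : projection ip p.
Local Notation C := R[i].
Local Notation pq := (pqd p).

Lemma plin : lin p.
Proof. move=> c x y; exact: (V_lin os Vp). Qed.

Lemma pqd_lin a : lin (pq a).
Proof.
rewrite /pqd; case: (a == ord0); first exact: plin.
move=> c x y; by rewrite (plin c x y) scalerBr opprD addrACA.
Qed.

Lemma pqd_idem a h : pq a (pq a h) = pq a h.
Proof.
have [pi _] := pp; rewrite /pqd; case: (a == ord0) => //.
by rewrite (linB plin) pi subrr subr0.
Qed.

Lemma pqd_adj a : adjoint_of ip (pq a) (pq a).
Proof.
have [_ pa] := pp; rewrite /pqd; case: (a == ord0) => // x y.
by rewrite (ipBl hip) (ipBr hip) pa.
Qed.

Lemma phi_adj S T a b : adjoint_of ip S T ->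
  adjoint_of ip (fun h => pq a (S (pq b h))) (fun h => pq b (T (pq a h))).
Proof.
move=> hST x y; by rewrite pqd_adj hST pqd_adj.
Qed.

Lemma compress_lin n (X : 'I_n -> 'I_n -> M2 H) u v : mxV V X -> lin (compress p X u v).
Proof.
move=> VX c x y; rewrite /compress (pqd_lin _ c x y) (V_lin os (VX _ _ _ _)).
by rewrite (pqd_lin _).
Qed.

Lemma Bf_ext (I : finType) (A A' : I -> I -> H -> H) g :
  (forall u v h, A u v h = A' u v h) -> Bf ip A g g = Bf ip A' g g.
Proof.
move=> e; rewrite /Bf; apply: eq_bigr => u _; apply: eq_bigr => v _; by rewrite e.
Qed.
Lemma Bf_neg (I : finType) (A : I -> I -> H -> H) g :
  Bf ip (fun u v h => - A u v h) g g = - Bf ip A g g.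
Proof.
rewrite /Bf -sumrN; apply: eq_bigr => u _; rewrite -sumrN; apply: eq_bigr => v _.
by rewrite (ipNl hip).
Qed.
Lemma Bf_add (I : finType) (A A' : I -> I -> H -> H) g :
  Bf ip (fun u v h => A u v h + A' u v h) g g = Bf ip A g g + Bf ip A' g g.
Proof.
rewrite /Bf -big_split; apply: eq_bigr => u _; rewrite -big_split; apply: eq_bigr => v _.
by rewrite (ipDl hip).
Qed.
Lemma Bf_scale (I : finType) (A : I -> I -> H -> H) (c : C) g :
  Bf ip (fun u v h => c *: A u v h) g g = c * Bf ip A g g.
Proof.
rewrite /Bf mulr_sumr; apply: eq_bigr => u _; rewrite mulr_sumr; apply: eq_bigr => v _.
by rewrite (ipZl hip).
Qed.
Lemma Bf_zero (I : finType) (A : I -> I -> H -> H) g :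
  (forall u v h, A u v h = 0) -> Bf ip A g g = 0.
Proof.
move=> e; rewrite /Bf big1 // => u _; rewrite big1 // => v _; by rewrite e (ip0l hip).
Qed.

Lemma mx_posE (I : finType) (A : I -> I -> H -> H) :
  mx_pos ip A <-> forall g, 0 <= Bf ip A g g.
Proof. by []. Qed.

Lemma adj_neg S T : adjoint_of ip S T -> adjoint_of ip (fun h => - S h) (fun h => - T h).
Proof. by move=> a x y; rewrite (ipNl hip) (ipNr hip) a. Qed.

Lemma J_fwd (Y : M2 H) : Jpq ip V p Y ->
  (forall a b, V (Y a b)) /\ (forall a b h, pq a (Y a b (pq b h)) = 0).
Proof.
case=> k [c [x [hx he]]].
have Vx : forall l a b, V (x l a b).
  by move=> l a b; case: (hx l) => [[VX _ _] _]; exact: (VX ord0 ord0 a b).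
have Z : forall l a b h, pq a (x l a b (pq b h)) = 0.
  move=> l a b h; case: (hx l) => [[VX _ P1] [_ _ P2]].
  have hA : forall u v, lin (compress p (fun _ _ : 'I_1 => x l) u v).
    by move=> u v; apply: compress_lin => i j a' b'; exact: Vx.
  have Q0 : forall g, Bf ip (compress p (fun _ _ : 'I_1 => x l)) g g = 0.
    move=> g; apply/eqP; rewrite eq_le; apply/andP; split; last exact: P1.
    have := P2 g; rewrite -/(Bf ip _ g g).
    rewrite (Bf_ext (A' := fun u v h => - compress p (fun _ _ : 'I_1 => x l) u v h)).
      by rewrite Bf_neg oppr_ge0.
    by move=> u v h'; rewrite /compress (linN (pqd_lin _)).
  exact: (form_zero hip hA Q0 (ord0, a) (ord0, b) h).
split.
  move=> a b.
  have := @V_sum _ _ _ _ os _ (index_enum 'I_k) xpredT (fun l h => c l *: x l a b h)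
     (fun l => VZ os (c l) (Vx l a b)).
  move/V_ext; apply => h; by rewrite he.
move=> a b h; rewrite he (lin_sum (pqd_lin a)) big1 // => l _.
by rewrite (linZ (pqd_lin a)) Z scaler0.
Qed.

Lemma Cpq1_of (x : M2 H) : (forall a b, V (x a b)) ->
  (forall a b, adjoint_of ip (x a b) (x b a)) ->
  (forall a b h, pq a (x a b (pq b h)) = 0) ->
  Cpq1 ip V p x /\ Cpq1 ip V p (fun a b h => - x a b h).
Proof.
move=> Vx ax Zx; split; split.
- by move=> i j a b; exact: Vx.
- by move=> i j a b; exact: ax.
- by move=> g; rewrite -/(Bf ip _ g g) Bf_zero // => u v h; exact: Zx.
- by move=> i j a b /=; have hh := VN os (Vx a b); exact hh.
- by move=> i j a b /=; exact: adj_neg (ax a b).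
- move=> g; rewrite -/(Bf ip _ g g) Bf_zero // => u v h.
  by rewrite /compress (linN (pqd_lin _)) Zx oppr0.
Qed.

Lemma J_bwd (Y : M2 H) : (forall a b, V (Y a b)) ->
  (forall a b h, pq a (Y a b (pq b h)) = 0) -> Jpq ip V p Y.
Proof.
move=> VY ZY; have [f hf] := V_adj os.
pose Ys a b := f (Y b a).
have VYs a b : V (Ys a b) by exact: (hf _ (VY b a)).1.
have aYs a b : adjoint_of ip (Ys a b) (Y b a) by exact: (hf _ (VY b a)).2.
have ZYs a b h : pq a (Ys a b (pq b h)) = 0.
  move: h; apply: (adj_zero hip); have hh := phi_adj a b (aYs a b); apply: (adj_ext hh) => // h.
pose x1 : M2 H := fun a b h => 2^-1 *: (Y a b h + Ys a b h).
pose x2 : M2 H := fun a b h => (- 'i / 2) *: (Y a b h - Ys a b h).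
have C1 := @Cpq1_of x1.
have C2 := @Cpq1_of x2.
have [h11 h12] : Cpq1 ip V p x1 /\ Cpq1 ip V p (fun a b h => - x1 a b h).
  apply: C1.
  - by move=> a b; exact (VZ os _ (VD os (VY a b) (VYs a b))).
  - by move=> a b; exact (adj_half hip (adj_swap hip (aYs b a)) (aYs a b)).
  - by move=> a b h; rewrite /x1 (linZ (pqd_lin a)) (linD (pqd_lin a)) ZY ZYs addr0 scaler0.
have [h21 h22] : Cpq1 ip V p x2 /\ Cpq1 ip V p (fun a b h => - x2 a b h).
  apply: C2.
  - by move=> a b; exact (VZ os _ (VB os (VY a b) (VYs a b))).
  - by move=> a b; exact (adj_halfi hip (adj_swap hip (aYs b a)) (aYs a b)).
  - by move=> a b h; rewrite /x2 (linZ (pqd_lin a)) (linB (pqd_lin a)) ZY ZYs subr0 scaler0.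
exists 2, (fun l : 'I_2 => if l == ord0 then 1 else 'i),
  (fun l : 'I_2 => if l == ord0 then x1 else x2); split.
  by move=> l; case: (l == ord0).
move=> a b h; rewrite big_ord_recl big_ord1 /= scale1r /x1 /x2 scalerA.
have -> : 'i * (- 'i / 2) = 2^-1 :> C by rewrite mulrA mulrN ii opprK mul1r.
have e2 : (2^-1 + 2^-1 : C) = 1 by field.
by rewrite -scalerDr addrACA subrr addr0 scalerDr -scalerDl e2 scale1r.
Qed.

Lemma half_id (z : H) : 2^-1 *: (z + z) = z.
Proof.
have e2 : (2^-1 + 2^-1 : C) = 1 by field.
by rewrite scalerDr -scalerDl e2 scale1r.
Qed.

Lemma Ct_fwd n (X : 'I_n -> 'I_n -> M2 H) : Ctilde ip V p X -> mx_pos ip (compress p X).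
Proof.
case=> Y [[VY _ PY] eJ] g; have := PY g; rewrite -!/(Bf ip _ g g).
rewrite (Bf_ext (A' := compress p Y)) // => u v h.
have [_ Z] := J_fwd (eJ u.1 v.1); have := Z u.2 v.2 h.
rewrite (linB (pqd_lin _)) => /eqP; rewrite subr_eq0 => /eqP //.
Qed.

Lemma Ct_bwd n (X : 'I_n -> 'I_n -> M2 H) : mxV V X -> mx_pos ip (compress p X) ->
  Ctilde ip V p X.
Proof.
move=> VX PX; have [f hf] := V_adj os.
have hA : forall u v, lin (compress p X u v) by move=> u v; exact: compress_lin.
have Ah := form_herm hip hA (fun g => ger0_real (PX g)).
pose Xs : 'I_n -> 'I_n -> M2 H := fun i j a b => f (X j i b a).
have VXs i j a b : V (Xs i j a b) by exact: (hf _ (VX j i b a)).1.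
have aXs i j a b : adjoint_of ip (Xs i j a b) (X j i b a) by exact: (hf _ (VX j i b a)).2.
have eXs : forall u v h, compress p Xs u v h = compress p X u v h.
  move=> u v h; have h1 := phi_adj u.2 v.2 (aXs u.1 v.1 u.2 v.2).
  have h2 := Ah v u.
  exact: (congr1 (fun F => F h) (adj_uniq hip h1 h2)).
pose Y : 'I_n -> 'I_n -> M2 H := fun i j a b h => 2^-1 *: (X i j a b h + Xs i j a b h).
have eY : forall u v h, compress p Y u v h = compress p X u v h.
  move=> u v h; rewrite /compress /Y (linZ (pqd_lin _)) (linD (pqd_lin _)).
  by have := eXs u v h; rewrite /compress => ->; rewrite half_id.
exists Y; split; [split|].
- by move=> i j a b; exact (VZ os _ (VD os (VX i j a b) (VXs i j a b))).
- by move=> i j a b; exact (adj_half hip (adj_swap hip (aXs j i b a)) (aXs i j a b)).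
- move=> g; rewrite -/(Bf ip _ g g) (Bf_ext (A' := compress p X)) //; exact: PX.
- move=> i j; apply: J_bwd.
    by move=> a b; exact (VB os (VX i j a b) (VZ os _ (VD os (VX i j a b) (VXs i j a b)))).
  move=> a b h; rewrite (linB (pqd_lin _)).
  have := eY (i, a) (j, b) h; rewrite /compress /= => ->.
  by rewrite subrr.
Qed.

Lemma V_adj_in S T : V T -> adjoint_of ip S T -> V S.
Proof.
move=> VT aS; case: os => _ _ _ /(_ T VT) [S' [VS' aS']].
by rewrite (adj_uniq hip aS aS').
Qed.

Lemma part1 (Y Y' : M2 H) : Jpq ip V p Y ->
  (forall a b, adjoint_of ip (Y' a b) (Y b a)) -> Jpq ip V p Y'.
Proof.
move=> /J_fwd [VY ZY] aY; apply: J_bwd.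
  by move=> a b; exact: V_adj_in (VY b a) (aY a b).
move=> a b h; move: h; apply: (adj_zero hip).
have hh := phi_adj a b (aY a b); apply: (adj_ext hh) => // h.
Qed.

Lemma part2 n (X : 'I_n -> 'I_n -> M2 H) : mxV V X -> Ctilde ip V p X -> mx_herm ip V p X.
Proof.
move=> VX /Ct_fwd PX X' aX i j.
have hA : forall u v, lin (compress p X u v) by move=> u v; exact: compress_lin.
have Ah := form_herm hip hA (fun g => ger0_real (PX g)).
apply: J_bwd.
  by move=> a b; exact (VB os (V_adj_in (VX j i b a) (aX i j a b)) (VX i j a b)).
move=> a b h; rewrite (linB (pqd_lin _)).
have h1 := phi_adj a b (aX i j a b).
have h2 := Ah (j, b) (i, a).
have := congr1 (fun F => F h) (adj_uniq hip h1 h2); rewrite /compress /= => ->.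
by rewrite subrr.
Qed.

Lemma part3 n (X Y : 'I_n -> 'I_n -> M2 H) : mxV V X -> mxV V Y ->
  Ctilde ip V p X -> Ctilde ip V p Y -> Ctilde ip V p (mx_add X Y).
Proof.
move=> VX VY /Ct_fwd PX /Ct_fwd PY; apply: Ct_bwd.
  by move=> i j a b; exact (VD os (VX i j a b) (VY i j a b)).
move=> g; rewrite -/(Bf ip _ g g).
rewrite (Bf_ext (A' := fun u v h => compress p X u v h + compress p Y u v h)).
  by rewrite Bf_add addr_ge0 //; [exact: PX | exact: PY].
by move=> u v h; rewrite /compress /mx_add (linD (pqd_lin _)).
Qed.

Lemma part4 n (X : 'I_n -> 'I_n -> M2 H) (t : R) : mxV V X -> 0 <= t ->
  Ctilde ip V p X -> Ctilde ip V p (mx_scale (t%:C)%C X).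
Proof.
move=> VX t0 /Ct_fwd PX; apply: Ct_bwd.
  by move=> i j a b; exact (VZ os _ (VX i j a b)).
move=> g; rewrite -/(Bf ip _ g g).
rewrite (Bf_ext (A' := fun u v h => (t%:C)%C *: compress p X u v h)).
  by rewrite Bf_scale mulr_ge0 // ?ler0c //; exact: PX.
by move=> u v h; rewrite /compress /mx_scale (linZ (pqd_lin _)).
Qed.

Lemma part6 n (X : 'I_n -> 'I_n -> M2 H) : mxV V X ->
  Ctilde ip V p X -> Ctilde ip V p (mx_scale (-1) X) -> mx_eqJ ip V p X (@mx_zero _ H n).
Proof.
move=> VX /Ct_fwd PX /Ct_fwd PN.
have hA : forall u v, lin (compress p X u v) by move=> u v; exact: compress_lin.
have Q0 : forall g, Bf ip (compress p X) g g = 0.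
  move=> g; apply: le_anti; apply/andP; split; last exact: PX.
  have := PN g; rewrite -/(Bf ip _ g g).
  rewrite (Bf_ext (A' := fun u v h => (-1) *: compress p X u v h)).
    by rewrite Bf_scale mulN1r oppr_ge0.
  by move=> u v h; rewrite /compress /mx_scale (linZ (pqd_lin _)).
have Z := form_zero hip hA Q0.
move=> i j; apply: J_bwd.
  by move=> a b; exact (VB os (VX i j a b) (V0 os)).
move=> a b h; rewrite /mx_zero subr0; exact: (Z (i, a) (j, b) h).
Qed.

Lemma sum_pair m (F : 'I_m * 'I_2 -> C) :
  \sum_(u : 'I_m * 'I_2) F u = \sum_(k < m) \sum_(c < 2) F (k, c).
Proof. rewrite pair_bigA; apply: eq_bigr => -[k c] _ //. Qed.

Lemma swap22 (I J K L : finType) (F : I -> J -> K -> L -> C) :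
  \sum_i \sum_j \sum_k \sum_l F i j k l = \sum_k \sum_l \sum_i \sum_j F i j k l.
Proof.
under eq_bigr => i _ do rewrite exchange_big.
rewrite exchange_big; apply: eq_bigr => k _.
under eq_bigr => i _ do rewrite exchange_big.
by rewrite exchange_big.
Qed.

Lemma ip_sum2 n (F : 'I_n -> 'I_n -> C) (v : 'I_n -> 'I_n -> H) w :
  ip (\sum_(i < n) \sum_(j < n) F i j *: v i j) w = \sum_(i < n) \sum_(j < n) F i j * ip (v i j) w.
Proof.
rewrite (ip_suml hip); apply: eq_bigr => i _; rewrite (ip_suml hip); apply: eq_bigr => j _.
by rewrite (ipZl hip).
Qed.

Lemma ip_lin_sum m (T : H -> H) (a b : 'I_m -> C) (x y : 'I_m -> H) : lin T ->
  ip (T (\sum_(l < m) a l *: x l)) (\sum_(k < m) b k *: y k) =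
  \sum_(l < m) \sum_(k < m) a l * (b k)^* * ip (T (x l)) (y k).
Proof.
move=> hT; rewrite (lin_sum hT) (ip_suml hip); apply: eq_bigr => l _.
rewrite (ip_sumr hip); apply: eq_bigr => k _.
by rewrite (linZ hT) (ipZl hip) (ipZr hip) mulrA.
Qed.

Lemma conj_form n m (alpha : 'M[C]_(n, m)) (X : 'I_n -> 'I_n -> M2 H) g :
  mxV V X ->
  Bf ip (compress p (mx_conj alpha X)) g g =
  Bf ip (compress p X) (fun v => \sum_(l < m) alpha v.1 l *: g (l, v.2))
                       (fun v => \sum_(l < m) alpha v.1 l *: g (l, v.2)).
Proof.
move=> VX.
rewrite (Bf_ext (A' := fun u v h => \sum_(i < n) \sum_(j < n)
   ((alpha i u.1)^* * alpha j v.1) *: compress p X (i, u.2) (j, v.2) h)); last first.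
  move=> u v h; rewrite /compress /mx_conj (lin_sum (pqd_lin _)); apply: eq_bigr => i _.
  rewrite (lin_sum (pqd_lin _)); apply: eq_bigr => j _.
  by rewrite (linZ (pqd_lin _)).
rewrite /Bf !sum_pair.
transitivity (\sum_(c < 2) \sum_(d < 2) \sum_(i < n) \sum_(j < n) \sum_(k < m) \sum_(l < m)
   (alpha i k)^* * alpha j l * ip (compress p X (i, c) (j, d) (g (l, d))) (g (k, c))).
  rewrite exchange_big; apply: eq_bigr => c _ /=.
  under eq_bigr => k _ do rewrite sum_pair /=.
  under eq_bigr => k _ do under eq_bigr => l _ do under eq_bigr => d _ do rewrite ip_sum2.
  under eq_bigr => k _ do rewrite exchange_big.
  rewrite exchange_big; apply: eq_bigr => d _.
  by rewrite swap22.
symmetry; rewrite exchange_big; apply: eq_bigr => c _ /=.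
under eq_bigr => i _ do rewrite sum_pair /=.
have hA : forall u v, lin (compress p X u v) by move=> u v; exact: compress_lin.
under eq_bigr => i _ do under eq_bigr => j _ do under eq_bigr => d _ do rewrite ip_lin_sum //.
under eq_bigr => i _ do rewrite exchange_big.
rewrite exchange_big; apply: eq_bigr => d _.
apply: eq_bigr => i _; apply: eq_bigr => j _.
rewrite exchange_big; apply: eq_bigr => k _; apply: eq_bigr => l _.
by rewrite [alpha j l * _]mulrC.
Qed.

Lemma part5 n m (alpha : 'M[C]_(n, m)) (X : 'I_n -> 'I_n -> M2 H) : mxV V X ->
  Ctilde ip V p X -> Ctilde ip V p (mx_conj alpha X).
Proof.
move=> VX /Ct_fwd PX; apply: Ct_bwd.
  move=> k l a b; rewrite /mx_conj.
  have := @V_sum _ _ _ _ os _ (index_enum 'I_n) xpredT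
     (fun i h => \sum_(j < n) ((alpha i k)^* * alpha j l) *: X i j a b h)
     (fun i => @V_sum _ _ _ _ os _ (index_enum 'I_n) xpredT
        (fun j h => ((alpha i k)^* * alpha j l) *: X i j a b h)
        (fun j => VZ os _ (VX i j a b))).
  move/V_ext; apply => h; by [].
move=> g; rewrite -/(Bf ip _ g g) conj_form //; exact: PX.
Qed.

Lemma Vpqd a : V (pq a).
Proof.
rewrite /pqd; case: (a == ord0) => //.
case: os => _ Vid _ _; exact (VB os Vid Vp).
Qed.

Lemma V_unit n : mxV V (@unit_n _ _ p n).
Proof.
move=> i j a b; rewrite /unit_n; case: (_ && _); first exact: Vpqd.
exact: V0 os.
Qed.

Lemma herm_adj n (X : 'I_n -> 'I_n -> M2 H) : mxV V X -> mx_herm ip V p X ->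
  forall u v, adjoint_of ip (compress p X u v) (compress p X v u).
Proof.
move=> VX hX u v; have [f hf] := V_adj os.
pose Xs : 'I_n -> 'I_n -> M2 H := fun i j a b => f (X j i b a).
have aXs i j a b : adjoint_of ip (Xs i j a b) (X j i b a) by exact: (hf _ (VX j i b a)).2.
have eJ := hX Xs aXs.
have h1 := phi_adj u.2 v.2 (aXs u.1 v.1 u.2 v.2).
apply: (adj_ext h1) => // h.
have [_ Z] := J_fwd (eJ u.1 v.1); have := Z u.2 v.2 h.
rewrite (linB (pqd_lin _)) => /eqP; rewrite subr_eq0 => /eqP //.
Qed.

Lemma Bf_real (I : finType) (A : I -> I -> H -> H) g :
  (forall u v, adjoint_of ip (A u v) (A v u)) -> (Bf ip A g g)^* = Bf ip A g g.
Proof.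
move=> aA; rewrite /Bf rmorph_sum /=.
under eq_bigr => u _ do rewrite rmorph_sum /=.
rewrite exchange_big; apply: eq_bigr => v _; apply: eq_bigr => u _.
by rewrite -(ipC hip) (adj_sym hip (aA v u)).
Qed.

Definition Nf n (h : 'I_n * 'I_2 -> H) : C :=
  \sum_(u : 'I_n * 'I_2) ip (pq u.2 (h u)) (pq u.2 (h u)).

Lemma Nf_ge0 n h : 0 <= @Nf n h.
Proof. by apply: sumr_ge0 => u _; exact: ip_ge0. Qed.

Lemma unit_form n h : Bf ip (compress p (@unit_n _ _ p n)) h h = Nf h.
Proof.
rewrite /Bf /Nf; apply: eq_bigr => u _.
rewrite (bigD1 u) //= big1 => [|v nv].
  rewrite addr0 /compress /unit_n !eqxx /=. by rewrite pqd_adj pqd_idem.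
rewrite /compress /unit_n.
have -> : (u.1 == v.1) && (u.2 == v.2) = false.
  by move: u v nv => [? ?] [? ?]; rewrite eq_sym xpair_eqE => /negbTE.
by rewrite /= (lin0 (pqd_lin _)) (ip0l hip).
Qed.

Lemma shift_form n (X : 'I_n -> 'I_n -> M2 H) (r : R) h :
  Bf ip (compress p (mx_add X (mx_scale (r%:C)%C (@unit_n _ _ p n)))) h h =
  Bf ip (compress p X) h h + (r%:C)%C * Nf h.
Proof.
rewrite -unit_form -Bf_scale -Bf_add; apply: Bf_ext => u v x.
by rewrite /compress /mx_add /mx_scale (linD (pqd_lin _)) (linZ (pqd_lin _)).
Qed.

Lemma C_arch (z N : C) : z^* = z -> 0 <= N ->
  (forall r : R, 0 < r -> 0 <= z + (r%:C)%C * N) -> 0 <= z.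
Proof.
move=> zr N0 hr.
have /complex_realP [x ex] : z \is Num.real by rewrite CrealE zr.
have /complex_realP [m em] : N \is Num.real by exact: ger0_real.
rewrite ex; rewrite em ler0c in N0; rewrite ler0c.
apply/ler_addgt0Pr => e e0;
have m1 : 0 < m + 1 by apply: ltr_wpDl N0 ltr01.
have := hr (e / (m + 1)) (divr_gt0 e0 m1).
rewrite ex em -rmorphM -rmorphD ler0c => h.
apply: le_trans h _; rewrite lerD2l -mulrA ler_piMr ?ltW //.
by rewrite mulrC ltr_pdivrMr // mul1r ltrDl ltr01.
Qed.

Lemma part8 n (X : 'I_n -> 'I_n -> M2 H) : mxV V X -> mx_herm ip V p X ->
  (forall r : R, 0 < r ->
     Ctilde ip V p (mx_add X (mx_scale (r%:C)%C (@unit_n _ _ p n)))) ->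
  Ctilde ip V p X.
Proof.
move=> VX hX hr; apply: Ct_bwd => // h; rewrite -/(Bf ip _ h h).
apply: (C_arch (N := Nf h)).
- by apply: Bf_real; exact: herm_adj.
- exact: Nf_ge0.
- move=> r r0; rewrite -shift_form; have := Ct_fwd (hr r r0) h; by [].
Qed.

Lemma bnd_entry T : V T ->
  exists K : R, 0 <= K /\ forall x, ip (T x) (T x) <= (K%:C)%C * ip x x.
Proof.
case: os => hb _ _ _ /hb [_ [M hM]]; exists (M ^+ 2); split; first exact: sqr_ge0.
move=> x; have := hM x; rewrite /hnorm => hab.
have a0 : 0 <= sqrtC (ip (T x) (T x)) by rewrite sqrtC_ge0 (ip_ge0 hip).
have b0 := le_trans a0 hab.
have := hab; rewrite -(ler_pXn2r (n := 2)) ?nnegrE //.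
by rewrite exprMn !sqrtCK -rmorphXn.
Qed.

Lemma unif_bound (I : finType) (P : I -> R -> Prop) :
  (forall w K K', K <= K' -> P w K -> P w K') ->
  (forall w, exists K, 0 <= K /\ P w K) -> exists K, 0 <= K /\ forall w, P w K.
Proof.
move=> mono ex; case/choice: ex => f hf.
exists (\sum_w f w); split; first by apply: sumr_ge0 => w _; case: (hf w).
move=> w; apply: mono (hf w).2.
rewrite (bigD1 w) //= lerDl sumr_ge0 // => w' _; by case: (hf w').
Qed.

Lemma term_le (I : finType) (g : I -> H) u : ip (g u) (g u) <= \sum_w ip (g w) (g w).
Proof.
rewrite (bigD1 u) //= lerDl sumr_ge0 // => w _; exact: ip_ge0.
Qed.

Lemma part7 n (X : 'I_n -> 'I_n -> M2 H) : mxV V X -> mx_herm ip V p X ->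
  exists r : R, 0 < r /\
    Ctilde ip V p (mx_add X (mx_scale (r%:C)%C (@unit_n _ _ p n))).
Proof.
move=> VX hX.
pose I := ('I_n * 'I_2)%type.
pose P := fun (w : (I * I)%type) (K : R) => forall x,
   ip (X w.1.1 w.2.1 w.1.2 w.2.2 x) (X w.1.1 w.2.1 w.1.2 w.2.2 x) <= (K%:C)%C * ip x x.
have mono : forall w K K', K <= K' -> P w K -> P w K'.
  move=> w K K' KK' hw x; apply: le_trans (hw x) _; move: KK'; rewrite -lecR => KK'; exact: (ler_wpM2r (ip_ge0 hip x) KK').
have [K [K0 hK]] := @unif_bound _ P mono (fun w => bnd_entry (VX w.1.1 w.2.1 w.1.2 w.2.2)).
pose S : R := \sum_(u : I) \sum_(v : I) (K + 1).
have S0 : 0 <= S by apply: sumr_ge0 => u _; apply: sumr_ge0 => v _; apply: addr_ge0.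
exists (S + 1); split; first by apply: ltr_wpDl S0 ltr01.
apply: Ct_bwd.
  by move=> i j a b; exact (VD os (VX i j a b) (VZ os _ (V_unit i j a b))).
move=> h; rewrite -/(Bf ip _ h h) shift_form.
set Q := Bf ip (compress p X) h h.
have Qr : Q^* = Q by apply: Bf_real; exact: herm_adj.
set N := Nf h.
have N0 : 0 <= N by exact: Nf_ge0.
pose g := fun w : I => pq w.2 (h w).
have key : - ((S%:C)%C * N) <= Q + Q^*.
  rewrite /Q /Bf [X in _ <= _ + X]rmorph_sum -big_split /= [X in - (X * _)]rmorph_sum mulr_suml -sumrN.
  apply: ler_sum => u _; rewrite [X in _ <= _ + X]rmorph_sum -big_split /= [X in - (X * _)]rmorph_sum mulr_suml -sumrN /=.
  apply: ler_sum => v _.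
  rewrite /compress (pqd_adj u.2) -/(g u) -/(g v).
  set a := X u.1 v.1 u.2 v.2 (g v); set b := g u.
  have hab : 0 <= ip (a + b) (a + b) by exact: ip_ge0.
  rewrite (ipDl hip) !(ipDr hip) (ipC hip a b) in hab.
  have ha : ip a a <= (K%:C)%C * N.
    apply: le_trans (hK (u, v) (g v)) _.
    by apply: ler_wpM2l; [rewrite ler0c | exact: term_le].
  have hb : ip b b <= N by exact: term_le.
  have e : ip a b + (ip a b)^* = (ip a a + ip a b) + ((ip a b)^* + ip b b) - (ip a a + ip b b) by ring.
  rewrite e; apply: le_trans _ (lerB (lexx _) (lerD ha hb)).
  rewrite rmorphD /= rmorph1 mulrDl mul1r -[X in X <= _]add0r.
  exact: lerB hab (lexx _).
have h1 : 0 <= (Q + Q^*) + (S%:C)%C * N by rewrite -subr_ge0 opprK in key.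
have h2 : 0 <= ((S + 2)%:C)%C * N by apply: mulr_ge0 => //; rewrite ler0c addr_ge0.
have e2 : 2 * (Q + ((S + 1)%:C)%C * N) = (Q + Q^* + (S%:C)%C * N) + ((S + 2)%:C)%C * N.
  rewrite Qr !rmorphD /= rmorph1; ring.
have : 0 <= 2 * (Q + ((S + 1)%:C)%C * N) by rewrite e2 addr_ge0.
by rewrite pmulr_rge0 // ltr0n.
Qed.

End Main.

Theorem theorem3p13 (R : realType) (H : lmodType R[i]) (ip : H -> H -> R[i])
  (V : (H -> H) -> Prop) (p : H -> H) :
  hilbert_space ip -> operator_system ip V -> V p -> projection ip p ->
  quotient_is_operator_system ip V p.
Proof.
move=> [hip _] os Vp pp; split.
- by move=> Y Y' hY hY'; eapply part1; eauto.
- by move=> n X VX hX; eapply part2; eauto.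
- by move=> n X Y VX VY hX hY; eapply part3; eauto.
- by move=> n X t VX t0 hX; eapply part4; eauto.
split.
- by move=> n m alpha X VX hX; eapply part5; eauto.
- by move=> n X VX hX hN; eapply part6; eauto.
- by move=> n X VX hX; eapply part7; eauto.
- by move=> n X VX hX hr; eapply part8; eauto.
Qed.
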